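(* Let $X$ be a finite set with similarity function $S$, suppose the target clustering $\mathcal{C}^{\ast}$ satisfies stability with respect to $S$, and let $\eta>0.5$. Consider the interactive process in the $\eta$-merge model with the global split and merge procedures described below. Then (a) every split performed by the split procedure is clean, and (b) every new cluster added (and labelled ''pure'') by the merge procedure contains points from a single target cluster.
   Context: For nonempty $A,A'\subseteq X$ let $S(A,A')$ be the average of $S(x,y)$ over $x\in A,y\in A'$. $\mathcal{C}^{\ast}=\{C^{\ast}_1,\dots,C^{\ast}_k\}$ satisfies stability w.r.t. $S$ if for all $i\neq j$, every nonempty proper $A\subset C^{\ast}_i$ and nonempty $A'\subseteq C^{\ast}_j$: $S(A,C^{\ast}_i\setminus A)>S(A,A')$. A split of a cluster $C_i$ into $C_{i,1},C_{i,2}$ is clean if both are nonempty and for each target cluster $C^{\ast}_j$ meeting $C_i$, either $C^{\ast}_j\cap C_i=C^{\ast}_j\cap C_{i,1}$ or $C^{\ast}_j\cap C_i=C^{\ast}_j\cap C_{i,2}$. Average-linkage tree $T_{glob}$: start with singletons as leaves; repeatedly merge the two current nodes $N_1,N_2$ with largest $S(N_1,N_2)$ (ties arbitrary) into parent $N_1\cup N_2$ until the root $X$ remains; nodes are identified with point sets. Process: start from an initial clustering of $X$, all clusters labelled ''impure''. An oracle repeatedly issues split$(C_i)$ (only if current cluster $C_i$ contains points of two or more target clusters) or merge$(C_i,C_j)$ (only if some target cluster $C^{\ast}_l$ has $|C_i\cap C^{\ast}_l|\ge\eta|C_i|$ and $|C_j\cap C^{\ast}_l|\ge\eta|C_j|$).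 Split procedure: let $N$ be the deepest node of $T_{glob}$ containing $C_i$, with children $N_1,N_2$; replace $C_i$ by $C_i\cap N_1$ and $C_i\cap N_2$, labelled ''impure''. Merge procedure: $\eta_1=1$ if $C_i$ is labelled ''pure'', else $\eta_1=\eta$; $\eta_2$ likewise for $C_j$. Find a node $N$ of $T_{glob}$ of maximal depth with $|N\cap C_i|\ge\eta_1|C_i|$ and $|N\cap C_j|\ge\eta_2|C_j|$; replace $C_i$ by $C_i\setminus N$, $C_j$ by $C_j\setminus N$ (labels kept, empty clusters discarded), and add the new cluster $N\cap(C_i\cup C_j)$ labelled ''pure''. *)

(* Defs.v *)
From HB Require Import structures.
From mathcomp Require Import all_boot all_order all_algebra.
Set Implicit Arguments. Unset Strict Implicit. Unset Printing Implicit Defensive.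
Import Order.TTheory GRing.Theory Num.Theory.
Local Open Scope ring_scope.

Section Clustering.
Variables (R : realFieldType) (T : finType) (S : T -> T -> R).

Definition avgS (A A' : {set T}) : R :=
  (\sum_(x in A) \sum_(y in A') S x y) / (#|A| * #|A'|)%:R.

Definition stable (Cstar : {set {set T}}) : Prop :=
  forall Ci Cj, Ci \in Cstar -> Cj \in Cstar -> Ci != Cj ->
  forall A A' : {set T}, A != set0 -> A \proper Ci ->
    A' != set0 -> A' \subset Cj ->
    avgS A A' < avgS A (Ci :\: A).

(* A run of average linkage is the sequence of merges (N1,N2) performed. *)
Definition merge_nodes (P : {set {set T}}) (N1 N2 : {set T}) : {set {set T}} :=
  (P :\: [set N1; N2]) :|: [set N1 :|: N2].

Fixpoint linkage_run (P : {set {set T}}) (steps : seq ({set T} * {set T})) : Prop :=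
  match steps with
  | [::] => P = [set [set: T]]
  | (N1, N2) :: rest =>
      [/\ N1 \in P, N2 \in P, N1 != N2,
          (forall A B, A \in P -> B \in P -> A != B -> avgS A B <= avgS N1 N2)
        & linkage_run (merge_nodes P N1 N2) rest]
  end.

Definition avg_linkage_tree (steps : seq ({set T} * {set T})) : Prop :=
  linkage_run [set [set x] | x : T] steps.

Definition tnodes (steps : seq ({set T} * {set T})) : {set {set T}} :=
  [set [set x] | x : T] :|: [set M | has (fun p => M == p.1 :|: p.2) steps].

Definition child_of (steps : seq ({set T} * {set T})) : rel {set T} :=
  fun M N => has (fun p => (N == p.1 :|: p.2) && ((M == p.1) || (M == p.2))) steps.

Definition depth (steps : seq ({set T} * {set T})) (M : {set T}) : nat :=
  #|[set N in tnodes steps | (N != M) && connect (child_of steps) M N]|.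

Record state := State { clusters : {set {set T}}; pure : {set {set T}} }.

Definition nb_targets_met (Cstar : {set {set T}}) (C : {set T}) : nat :=
  #|[set D in Cstar | C :&: D != set0]|.

Definition split_choice (steps : seq ({set T} * {set T})) (Cstar : {set {set T}})
    (st : state) (C N N1 N2 : {set T}) : Prop :=
  [/\ C \in clusters st, (1 < nb_targets_met Cstar C)%N,
      N \in tnodes steps, C \subset N &
      (forall M, M \in tnodes steps -> C \subset M -> (depth steps M <= depth steps N)%N)]
  /\ ((N1, N2) \in steps /\ N = N1 :|: N2).

Definition split_result (st : state) (C N1 N2 : {set T}) : state :=
  State ((clusters st :\ C) :|: [set C :&: N1; C :&: N2])
        (pure st :\: [set C; C :&: N1; C :&: N2]).

Definition eta_of (eta : R) (st : state) (C : {set T}) : R :=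
  if C \in pure st then 1 else eta.

Definition merge_ok (steps : seq ({set T} * {set T})) (eta : R) (st : state)
    (Ci Cj N : {set T}) : Prop :=
  N \in tnodes steps /\
  (eta_of eta st Ci * #|Ci|%:R <= #|N :&: Ci|%:R) /\
  (eta_of eta st Cj * #|Cj|%:R <= #|N :&: Cj|%:R).

Definition merge_choice (steps : seq ({set T} * {set T})) (Cstar : {set {set T}})
    (eta : R) (st : state) (Ci Cj N : {set T}) : Prop :=
  [/\ Ci \in clusters st, Cj \in clusters st & Ci != Cj] /\
  [/\ (exists2 Cl, Cl \in Cstar &
         (eta * #|Ci|%:R <= #|Ci :&: Cl|%:R) /\ (eta * #|Cj|%:R <= #|Cj :&: Cl|%:R)),
      merge_ok steps eta st Ci Cj N &
      (forall M, merge_ok steps eta st Ci Cj M -> (depth steps M <= depth steps N)%N)].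

Definition nonempty_sets (L : seq {set T}) : {set {set T}} :=
  [set D in L | D != set0].

Definition merge_result (st : state) (Ci Cj N : {set T}) : state :=
  State ((clusters st :\: [set Ci; Cj])
           :|: nonempty_sets [:: Ci :\: N; Cj :\: N]
           :|: [set N :&: (Ci :|: Cj)])
        ((pure st :\: [set Ci; Cj])
           :|: nonempty_sets ((if Ci \in pure st then [:: Ci :\: N] else [::])
                              ++ (if Cj \in pure st then [:: Cj :\: N] else [::]))
           :|: [set N :&: (Ci :|: Cj)]).

Inductive reachable (steps : seq ({set T} * {set T})) (Cstar : {set {set T}}) (eta : R)
  : state -> Prop :=
  | reach_init P0 : partition P0 [set: T] -> reachable steps Cstar eta (State P0 set0)
  | reach_split st C N N1 N2 : reachable steps Cstar eta st ->
      split_choice steps Cstar st C N N1 N2 ->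
      reachable steps Cstar eta (split_result st C N1 N2)
  | reach_merge st Ci Cj N : reachable steps Cstar eta st ->
      merge_choice steps Cstar eta st Ci Cj N ->
      reachable steps Cstar eta (merge_result st Ci Cj N).

Definition clean_split (Cstar : {set {set T}}) (C C1 C2 : {set T}) : Prop :=
  [/\ C1 != set0, C2 != set0 &
      forall D, D \in Cstar -> C :&: D != set0 ->
        C :&: D = C1 :&: D \/ C :&: D = C2 :&: D].

End Clustering.

(* Main.v *)
Require Import Defs.
From HB Require Import structures.
From mathcomp Require Import all_boot all_order all_algebra.
From mathcomp Require Import lra.
Set Implicit Arguments. Unset Strict Implicit. Unset Printing Implicit Defensive.
Import Order.TTheory GRing.Theory Num.Theory.
Local Open Scope ring_scope.

Section Alg.
Variables (R : realFieldType) (T : finType) (S : T -> T -> R).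

Definition sumS (A B : {set T}) : R := \sum_(x in A) \sum_(y in B) S x y.

Lemma avgS_sym (S_sym : forall x y, S x y = S y x) A B : avgS S A B = avgS S B A.
Proof.
rewrite /avgS exchange_big mulnC; congr (_ / _).
by apply: eq_bigr => y _; apply: eq_bigr => x _; rewrite S_sym.
Qed.

Lemma sum_dec (F : {set {set T}}) (B : {set T}) (g : T -> R) :
  trivIset F -> B \subset cover F ->
  \sum_(y in B) g y = \sum_(E in F) \sum_(y in B :&: E) g y.
Proof.
move=> tF sBF.
rewrite (partition_big (pblock F) (mem F)); last first.
  by move=> y yB; apply: pblock_mem; apply: (subsetP sBF).
apply: eq_bigr => E EF; apply: eq_bigl => y; rewrite !inE.
apply/andP/andP => [[yB /eqP <-]|[yB yE]]; split => //.
  by rewrite mem_pblock; apply: (subsetP sBF).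
by rewrite (def_pblock tF EF yE).
Qed.

Lemma sumS_dec (F : {set {set T}}) (A B : {set T}) :
  trivIset F -> B \subset cover F ->
  sumS A B = \sum_(E in F) sumS A (B :&: E).
Proof.
move=> tF sBF; rewrite /sumS (exchange_big _ _ _ (mem F)).
by apply: eq_bigr => x _; apply: sum_dec.
Qed.

Lemma card_dec (F : {set {set T}}) (B : {set T}) :
  trivIset F -> B \subset cover F ->
  (#|B|%:R : R) = \sum_(E in F) (#|B :&: E|%:R : R).
Proof.
move=> tF sBF.
have h (C : {set T}) : (#|C|%:R : R) = \sum_(y in C) 1 by rewrite sumr_const.
rewrite h (sum_dec (fun _ => 1) tF sBF); apply: eq_bigr => E _; by rewrite h.
Qed.

Lemma avg_lt (A B : {set T}) (F : {set {set T}}) m :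
  A != set0 -> B != set0 -> trivIset F -> B \subset cover F ->
  (forall E, E \in F -> B :&: E != set0 -> avgS S A (B :&: E) < m) ->
  avgS S A B < m.
Proof.
move=> A0 B0 tF sBF H.
have cA : (0 < #|A|)%N by rewrite card_gt0.
have le E : E \in F -> sumS A (B :&: E) <= m * (#|A| * #|B :&: E|)%:R.
  move=> EF; have [->|ne] := eqVneq (B :&: E) set0.
    by rewrite /sumS cards0 muln0 mulr0 big1 // => x _; rewrite big_set0.
  apply: ltW; rewrite -ltr_pdivrMr; first exact: H.
  by rewrite ltr0n muln_gt0 cA card_gt0.
have [y yB] : exists y, y \in B by apply/set0Pn.
have yc : y \in cover F by apply: (subsetP sBF).
have EF := pblock_mem yc.
have ne : B :&: pblock F y != set0.
  by apply/set0Pn; exists y; rewrite inE yB mem_pblock.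
have lt : sumS A (B :&: pblock F y) < m * (#|A| * #|B :&: pblock F y|)%:R.
  rewrite -ltr_pdivrMr; first exact: H.
  by rewrite ltr0n muln_gt0 cA card_gt0.
rewrite /avgS ltr_pdivrMr; last by rewrite ltr0n muln_gt0 cA card_gt0.
rewrite -/(sumS A B) (sumS_dec A tF sBF) natrM (card_dec tF sBF) mulr_sumr mulr_sumr.
rewrite (bigD1 _ EF) [X in _ < X](bigD1 _ EF) /=.
apply: ltr_leD; first by rewrite -natrM.
apply: ler_sum => E /andP [EF' _]; rewrite -natrM; exact: le.
Qed.


Lemma setI0P (A B : {set T}) : A :&: B = set0 -> forall x, x \in A -> x \in B -> False.
Proof. by move/setP=> h x xA xB; move: (h x); rewrite !inE xA xB. Qed.

Lemma disjI0 (A B : {set T}) : [disjoint A & B] -> A :&: B = set0.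
Proof. by rewrite -setI_eq0 => /eqP. Qed.

Section Tree.
Variables (S_sym : forall x y, S x y = S y x) (Cstar : {set {set T}}).
Hypothesis hCstar : partition Cstar [set: T].
Hypothesis hstab : stable S Cstar.

Definition lam (M : {set T}) : Prop :=
  forall D, D \in Cstar -> [\/ M \subset D, D \subset M | M :&: D = set0].

Definition Inv (P : {set {set T}}) : Prop :=
  [/\ trivIset P, cover P = [set: T], set0 \notin P & forall M, M \in P -> lam M].

Definition maxpair (P : {set {set T}}) N1 N2 :=
  forall A B, A \in P -> B \in P -> A != B -> avgS S A B <= avgS S N1 N2.

Lemma key P N1 N2 D : Inv P -> N1 \in P -> N2 \in P -> N1 != N2 -> maxpair P N1 N2 ->
  D \in Cstar -> N1 \proper D -> N2 :&: D = set0 -> False.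
Proof.
case=> tP cP n0P lP N1P N2P ne hmax DC pr dis.
case/and3P: hCstar => /eqP cov tC n0C.
have N10 : N1 != set0 by apply: contraNneq n0P => <-.
have N20 : N2 != set0 by apply: contraNneq n0P => <-.
have h1 : avgS S N1 N2 < avgS S N1 (D :\: N1).
  apply: (avg_lt (F:=Cstar)) => //; first by rewrite cov subsetT.
  move=> E EC ne2; apply: (hstab DC EC _ N10 _ ne2 (subsetIr _ _)) => //.
  apply/eqP => DE; move: ne2; rewrite -DE dis; by rewrite eqxx.
have : avgS S N1 (D :\: N1) < avgS S N1 (D :\: N1); last by rewrite ltxx.
apply: (avg_lt (F:=P)) => //; first by rewrite setD_eq0; case/andP: pr.
  by rewrite cP subsetT.
move=> M MP ne3.
have MN : M != N1.
  apply: contraNneq ne3 => ->; apply/eqP/setP => x; rewrite !inE.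
  by case: (x \in N1); rewrite /= ?andbF.
have dMN := disjI0 (trivIsetP tP _ _ MP N1P MN).
have sub : M \subset D :\: N1.
  case: (lP M MP D DC) => [s|s|d].
  - apply/subsetP => x xM; rewrite inE (subsetP s _ xM) andbT.
    by apply/negP => xN; exact: (setI0P dMN xM xN).
  - exfalso; case/set0Pn: N10 => x xN.
    have xD : x \in D by apply: (subsetP (proper_sub pr)).
    exact: (setI0P dMN (subsetP s _ xD) xN).
  - exfalso; case/set0Pn: ne3 => x; rewrite !inE => /andP [/andP [_ xD] xM].
    exact: (setI0P d xM xD).
rewrite (setIidPr sub); apply: le_lt_trans h1; apply: (hmax _ _ N1P MP); by rewrite eq_sym.
Qed.

Lemma lam_merge P N1 N2 : Inv P -> N1 \in P -> N2 \in P -> N1 != N2 -> maxpair P N1 N2 ->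
  lam (N1 :|: N2).
Proof.
move=> iP N1P N2P ne hmax D DC; have [tP cP n0P lP] := iP.
case: (lP N1 N1P D DC) => [s1|s1|d1]; case: (lP N2 N2P D DC) => [s2|s2|d2].
- by apply: Or31; rewrite subUset s1 s2.
- by apply: Or32; apply: subset_trans s2 (subsetUr _ _).
- case: (boolP (D \subset N1)) => h; first by apply: Or32; apply: subset_trans h (subsetUl _ _).
  by exfalso; apply: (key iP N1P N2P ne hmax DC _ d2); rewrite properE s1 h.
- by apply: Or32; apply: subset_trans s1 (subsetUl _ _).
- by apply: Or32; apply: subset_trans s1 (subsetUl _ _).
- by apply: Or32; apply: subset_trans s1 (subsetUl _ _).
- case: (boolP (D \subset N2)) => h; first by apply: Or32; apply: subset_trans h (subsetUr _ _).
  exfalso; apply: (key iP N2P N1P _ _ DC _ d1); first by rewrite eq_sym.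
    by move=> A B AP BP AB; rewrite [X in _ <= X](avgS_sym S_sym); exact: hmax.
  by rewrite properE s2 h.
- by apply: Or32; apply: subset_trans s2 (subsetUr _ _).
- by apply: Or33; rewrite setIUl d1 d2 setU0.
Qed.


Lemma inv_merge P N1 N2 : Inv P -> N1 \in P -> N2 \in P -> N1 != N2 -> maxpair P N1 N2 ->
  Inv (merge_nodes P N1 N2).
Proof.
move=> iP N1P N2P ne hmax; have [tP cP n0P lP] := iP.
have N10 : N1 != set0 by apply: contraNneq n0P => <-.
have d12 := disjI0 (trivIsetP tP _ _ N1P N2P ne).
split.
- apply/trivIsetP => A B; rewrite /merge_nodes !inE.
  have old X : X \in P -> ~~ ((X == N1) || (X == N2)) -> X :&: (N1 :|: N2) = set0.
    move=> XP; rewrite negb_or => /andP [h1 h2].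
    by rewrite setIUr (disjI0 (trivIsetP tP _ _ XP N1P h1)) (disjI0 (trivIsetP tP _ _ XP N2P h2)) setU0.
  case/orP => [/andP [hA AP]|/eqP ->]; case/orP => [/andP [hB BP]|/eqP ->] AB.
  + exact: (trivIsetP tP _ _ AP BP AB).
  + by rewrite -setI_eq0 (old _ AP hA).
  + by rewrite -setI_eq0 setIC (old _ BP hB).
  + by rewrite eqxx in AB.
- apply/eqP; rewrite eqEsubset subsetT /=; apply/subsetP => x _.
  have : x \in cover P by rewrite cP.
  case/bigcupP => B BP xB; apply/bigcupP.
  case: (boolP ((B == N1) || (B == N2))) => h.
    exists (N1 :|: N2); first by rewrite !inE eqxx orbT.
    by case/orP: h => /eqP <-; rewrite inE xB ?orbT.
  by exists B => //; rewrite !inE h BP.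
- rewrite /merge_nodes !inE negb_or negb_and negbK (negbTE n0P) orbT /=.
  by rewrite eq_sym setU_eq0 negb_and N10.
- move=> M; rewrite /merge_nodes !inE => /orP [/andP [_ MP]|/eqP ->]; first exact: lP.
  exact: (lam_merge iP N1P N2P ne hmax).
Qed.

Lemma inv_init : Inv [set [set x] | x : T].
Proof.
case/and3P: hCstar => /eqP cov tC n0C.
split.
- apply/trivIsetP => A B /imsetP [x _ ->] /imsetP [y _ ->] ne.
  rewrite -setI_eq0; apply/eqP/setP => z; rewrite !inE.
  by apply/negP => /andP [/eqP zx /eqP zy]; move: ne; rewrite -zx -zy eqxx.
- apply/eqP; rewrite eqEsubset subsetT /=; apply/subsetP => x _.
  by apply/bigcupP; exists [set x]; [apply: imset_f | rewrite inE].
- apply/imsetP => [[x _ /setP /(_ x)]]; by rewrite !inE eqxx.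
- move=> M /imsetP [x _ ->] D DC.
  case: (boolP (x \in D)) => h; first by apply: Or31; rewrite sub1set.
  apply: Or33; apply/setP => z; rewrite !inE.
  by apply/negP => /andP [/eqP -> ]; rewrite (negbTE h).
Qed.

Definition U (s : seq ({set T} * {set T})) : {set {set T}} :=
  [set M | has (fun p => M == p.1 :|: p.2) s].

Lemma run_pairs s : forall P, linkage_run S P s -> Inv P ->
  forall p, p \in s ->
  [/\ p.1 \in P :|: U s, p.2 \in P :|: U s, p.1 :&: p.2 = set0, p.1 != set0 & p.2 != set0]
  /\ [/\ lam p.1, lam p.2 & lam (p.1 :|: p.2)].
Proof.
elim: s => [//|[N1 N2] rest IH] P /= [N1P N2P ne hmax run] iP p.
have [tP cP n0P lP] := iP.
have iP' := inv_merge iP N1P N2P ne hmax.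
rewrite in_cons => /orP [/eqP -> /=|prest].
  split; last by split; [exact: lP| exact: lP| exact: (lam_merge iP N1P N2P ne hmax)].
  split.
  - by rewrite inE N1P.
  - by rewrite inE N2P.
  - exact: (disjI0 (trivIsetP tP _ _ N1P N2P ne)).
  - by apply: contraNneq n0P => <-.
  - by apply: contraNneq n0P => <-.
have [[h1 h2 h3 h4 h5] hl] := IH _ run iP' p prest.
have sub : merge_nodes P N1 N2 :|: U rest \subset P :|: U ((N1, N2) :: rest).
  apply/subsetP => M; rewrite /merge_nodes /U !inE /=.
  case/orP => [/orP [/andP [_ ->]//|/eqP ->]|->]; last by rewrite !orbT.
  by rewrite eqxx orbT.
by split => //; split => //; apply: (subsetP sub).
Qed.


Lemma tree_pairs steps : avg_linkage_tree S steps -> forall p, p \in steps ->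
  [/\ p.1 \in tnodes steps, p.2 \in tnodes steps, p.1 :&: p.2 = set0, p.1 != set0 & p.2 != set0]
  /\ [/\ lam p.1, lam p.2 & lam (p.1 :|: p.2)].
Proof. move=> ht p ps; exact: (run_pairs ht inv_init ps). Qed.

Lemma lam_tnodes steps M : avg_linkage_tree S steps -> M \in tnodes steps -> lam M.
Proof.
move=> ht; rewrite /tnodes inE => /orP [Ms|].
  by have [_ _ _ lP] := inv_init; apply: lP.
rewrite inE => /hasP [q qs /eqP ->].
by have [_ [_ _ ]] := tree_pairs ht qs.
Qed.

Lemma nb_le1 (C D : {set T}) : D \in Cstar -> C \subset D -> (nb_targets_met Cstar C <= 1)%N.
Proof.
case/and3P: hCstar => /eqP cov tC n0C DC CD.
rewrite /nb_targets_met -(cards1 D); apply: subset_leq_card; apply/subsetP => E.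
rewrite !inE => /andP [EC ne]; apply/eqP; apply: contraNeq ne => ED.
have := disjI0 (trivIsetP tC _ _ EC DC ED).
move=> d; apply/eqP/setP => x; rewrite !inE.
by apply/negP => /andP [xC xE]; exact: (setI0P d xE (subsetP CD _ xC)).
Qed.

End Tree.

Lemma connect_subset (e : rel {set T}) : (forall a b, e a b -> a \subset b) ->
  forall a b, connect e a b -> a \subset b.
Proof.
move=> H a b /connectP [p]; elim: p a => [|c p IH] a /=; first by move=> _ ->.
by case/andP => eac pc bl; apply: subset_trans (H _ _ eac) (IH _ pc bl).
Qed.

Lemma child_sub (steps : seq ({set T} * {set T})) (M N : {set T}) : child_of steps M N -> M \subset N.
Proof.
case/hasP => q _ /andP [/eqP -> /orP [] /eqP ->]; [exact: subsetUl | exact: subsetUr].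
Qed.

Lemma depth_lt (steps : seq ({set T} * {set T})) (M N : {set T}) :
  child_of steps M N -> M \proper N -> N \in tnodes steps ->
  (depth steps N < depth steps M)%N.
Proof.
move=> ch pr Nt; apply: proper_card; apply/properP; split.
  apply/subsetP => X /setIdP [Xt /andP [XN cNX]].
  apply/setIdP; split => //; apply/andP; split; last exact: connect_trans (connect1 ch) cNX.
  apply/eqP => XM; move: pr; rewrite properE -XM.
  by rewrite (connect_subset (@child_sub steps) cNX) andbF.
exists N.
  apply/setIdP; split => //; rewrite (connect1 ch) andbT.
  by apply/eqP => NM; move: pr; rewrite NM properE subxx.
by apply/setIdP => [[_ /andP [/eqP]]].
Qed.


Lemma subU_disj (D N1 N2 : {set T}) : D \subset N1 :|: N2 -> N1 :&: D = set0 -> D \subset N2.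
Proof.
move=> s d; apply/subsetP => x xD; move: (subsetP s _ xD); rewrite inE => /orP [x1|//].
by case: (setI0P d x1 xD).
Qed.

Lemma proper_U (N1 N2 : {set T}) : N1 :&: N2 = set0 -> N2 != set0 -> N1 \proper N1 :|: N2.
Proof.
move=> d n2; rewrite properE subsetUl /=; apply/negP => s.
case/set0Pn: n2 => x x2; have : x \in N1 by apply: (subsetP s); rewrite inE x2 orbT.
by move=> x1; case: (setI0P d x1 x2).
Qed.

Section Proc.
Variables (S_sym : forall x y, S x y = S y x) (Cstar : {set {set T}}).
Hypothesis hCstar : partition Cstar [set: T].
Hypothesis hstab : stable S Cstar.
Variables (eta : R) (steps : seq ({set T} * {set T})).
Hypothesis heta : 1 / 2 < eta.
Hypothesis htree : avg_linkage_tree S steps.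

Lemma split_clean st C N N1 N2 : split_choice steps Cstar st C N N1 N2 ->
  clean_split Cstar C (C :&: N1) (C :&: N2).
Proof.
case=> [[CC nb Nt CN hdeep] [ps NE]].
have [[/= N1t N2t d12 n1 n2] [/= l1 l2 l12]] := tree_pairs S_sym hCstar hstab htree ps.
have notin D : D \in Cstar -> ~~ (C \subset D).
  by move=> DC; apply/negP => CD; move: (nb_le1 hCstar DC CD); rewrite leqNgt nb.
have ch1 : child_of steps N1 N by apply/hasP; exists (N1, N2) => //=; rewrite NE !eqxx.
have ch2 : child_of steps N2 N by apply/hasP; exists (N1, N2) => //=; rewrite NE !eqxx orbT.
have pr1 : N1 \proper N by rewrite NE; apply: proper_U.
have pr2 : N2 \proper N by rewrite NE setUC; apply: proper_U => //; rewrite setIC.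
have CU : C \subset N1 :|: N2 by rewrite -NE.
have deep X : X \in tnodes steps -> child_of steps X N -> X \proper N -> C \subset X -> False.
  move=> Xt ch pr CX; have := hdeep X Xt CX; rewrite leqNgt.
  by rewrite (depth_lt ch pr Nt).
split.
- apply/negP => /eqP h; apply: (deep N2) => //; apply: (subU_disj CU); by rewrite setIC.
- apply/negP => /eqP h; apply: (deep N1) => //; apply: (subU_disj (N1 := N2) (N2 := N1)); first by rewrite setUC.
  by rewrite setIC.
move=> D DC CD0.
have DN : D \subset N.
  rewrite NE in Nt *; case: (l12 D DC) => [s|//|d].
  - by move: (notin D DC); rewrite (subset_trans CN) // NE.
  - exfalso; move: CD0; case/set0Pn => x; rewrite inE => /andP [xC xD].
    by case: (setI0P d (subsetP CU _ xC) xD).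
rewrite NE in DN.
case: (boolP (D \subset N1)) => h1.
  by left; rewrite -setIA (setIidPr h1).
case: (boolP (D \subset N2)) => h2.
  by right; rewrite -setIA (setIidPr h2).
exfalso; case: (l1 D DC) => [s1|s1|d1]; last by rewrite (subU_disj DN d1) in h2.
  case: (l2 D DC) => [s2|s2|d2]; [|by rewrite s2 in h2|].
    by move: (notin D DC); rewrite (subset_trans CN) // NE subUset s1 s2.
  by move: h1; rewrite (subU_disj (N1 := N2) (N2 := N1) _ d2) // setUC.
by rewrite s1 in h1.
Qed.

Definition IS (st : state T) : Prop :=
  (forall C, C \in clusters st -> C != set0) /\
  (forall C, C \in pure st -> exists2 D, D \in Cstar & C \subset D).

Lemma eta_pos : 0 < eta.
Proof. apply: lt_trans heta; by rewrite divr_gt0. Qed.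

Lemma meetsCl (X Cl : {set T}) : X != set0 -> eta * #|X|%:R <= #|X :&: Cl|%:R -> X :&: Cl != set0.
Proof.
move=> X0 h; apply/negP => /eqP e; move: h; rewrite e cards0 leNgt => /negP; apply.
by rewrite mulr_gt0 ?eta_pos // ltr0n card_gt0.
Qed.

Lemma full (X Y : {set T}) : (#|X|%:R : R) <= #|Y :&: X|%:R -> X \subset Y.
Proof.
rewrite ler_nat => h; apply/setIidPr; apply/eqP; rewrite eqEcard subsetIr /=.
by [].
Qed.

Lemma merge_single st Ci Cj N : IS st -> merge_choice steps Cstar eta st Ci Cj N ->
  exists2 Cl, Cl \in Cstar & N :&: (Ci :|: Cj) \subset Cl.
Proof.
case=> [cne pu] [[CiC CjC ne] [[Cl ClC [hi hj]] [Nt [mi mj]] hdeep]].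
exists Cl => //.
case/and3P: hCstar => /eqP cov tC n0C.
have pureCl X : X \in pure st -> X :&: Cl != set0 -> X \subset Cl.
  move=> /pu [D DC XD] XCl; have [<-//|DCl] := eqVneq D Cl.
  have d := disjI0 (trivIsetP tC _ _ DC ClC DCl).
  case/set0Pn: XCl => x; rewrite inE => /andP [xX xCl].
  by case: (setI0P d (subsetP XD _ xX) xCl).
have okX (N' X : {set T}) : X \in clusters st -> eta * #|X|%:R <= #|X :&: Cl|%:R -> Cl \subset N' ->
    eta_of eta st X * #|X|%:R <= #|N' :&: X|%:R.
  move=> XC hX ClN; rewrite /eta_of; case: ifP => pX.
    have XCl := pureCl X pX (meetsCl (cne X XC) hX).
    by rewrite mul1r (setIidPr (subset_trans XCl ClN)).
  apply: le_trans hX _; rewrite ler_nat; apply: subset_leq_card.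
  apply/subsetP => x; rewrite !inE => /andP [xX xCl]; by rewrite xX (subsetP ClN).
have deeper (N' : {set T}) : N' \in tnodes steps -> child_of steps N' N -> N' \proper N -> Cl \subset N' -> False.
  move=> N't ch pr ClN.
  have ok : merge_ok steps eta st Ci Cj N'.
    by split => //; split; apply: okX.
  by move: (hdeep N' ok); rewrite leqNgt (depth_lt ch pr Nt).
case: (lam_tnodes S_sym hCstar hstab htree Nt ClC) => [sN|sCl|dN].
- exact: subset_trans (subsetIl _ _) sN.
- case: (boolP (N \subset Cl)) => hN; first exact: subset_trans (subsetIl _ _) hN.
  exfalso; move: Nt; rewrite /tnodes inE => /orP [|].
    case/imsetP => x _ Nx; move: hN; rewrite Nx sub1set.
    have : Cl != set0 by apply: contraNneq n0C => <-.
    case/set0Pn => z zCl; move: (subsetP sCl _ zCl); rewrite Nx inE => /eqP <-.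
    by rewrite zCl.
  rewrite inE => /hasP [[Q1 Q2] qs /= /eqP NQ].
  have [[/= Q1t Q2t d12 n1 n2] [/= l1 l2 l12]] := tree_pairs S_sym hCstar hstab htree qs.
  have ch1 : child_of steps Q1 N by apply/hasP; exists (Q1, Q2) => //=; rewrite NQ !eqxx.
  have ch2 : child_of steps Q2 N by apply/hasP; exists (Q1, Q2) => //=; rewrite NQ !eqxx orbT.
  have pr1 : Q1 \proper N by rewrite NQ; apply: proper_U.
  have pr2 : Q2 \proper N by rewrite NQ setUC; apply: proper_U => //; rewrite setIC.
  rewrite NQ in sCl hN.
  case: (boolP (Cl \subset Q1)) => h1; first exact: (deeper Q1).
  case: (boolP (Cl \subset Q2)) => h2; first exact: (deeper Q2).
  case: (l1 Cl ClC) => [s1|s1|d1]; last by rewrite (subU_disj sCl d1) in h2.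
    case: (l2 Cl ClC) => [s2|s2|d2]; [|by rewrite s2 in h2|].
      by rewrite subUset s1 s2 in hN.
    by move: h1; rewrite (subU_disj (N1 := Q2) (N2 := Q1) _ d2) // setUC.
  by rewrite s1 in h1.
- exfalso; move: mi; rewrite /eta_of; case: ifP => pi.
    rewrite mul1r => /full CiN.
    case/set0Pn: (meetsCl (cne Ci CiC) hi) => x; rewrite inE => /andP [xCi xCl].
    by case: (setI0P dN (subsetP CiN _ xCi) xCl).
  move=> mi.
  have cle : (#|N :&: Ci| + #|Ci :&: Cl| <= #|Ci|)%N.
    rewrite -cardsUI.
    have -> : (N :&: Ci) :&: (Ci :&: Cl) = set0.
      apply/setP => x; rewrite !inE; apply/negP => /andP [/andP [xN _] /andP [_ xCl]].
      by case: (setI0P dN xN xCl).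
    rewrite cards0 addn0; apply: subset_leq_card; by rewrite subUset subsetIr subsetIl.
  have cpos : (0 : R) < #|Ci|%:R by rewrite ltr0n card_gt0 cne.
  move: cle; rewrite -(ler_nat R) natrD => cle.
  have : eta * #|Ci|%:R + eta * #|Ci|%:R <= #|Ci|%:R by apply: le_trans cle; apply: lerD.
  have := heta; set c := (#|Ci|%:R : R) => he h.
  have : (1 / 2) * c < eta * c by rewrite ltr_pM2r.
  lra.
Qed.

Lemma reach_inv st : reachable steps Cstar eta st -> IS st.
Proof.
elim => {st}.
- move=> P0 hP; split => //= C; last by rewrite inE.
  by case/and3P: hP => _ _ n0 CP; apply: contraNneq n0 => <-.
- move=> st C N N1 N2 _ [cne pu] sc.
  have [c1 c2 _] := split_clean sc.
  split => /= X; rewrite !inE.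
    by case/orP => [/andP [_ /cne]//|/orP [/eqP ->|/eqP ->]].
  by case/andP => _ /pu.
- move=> st Ci Cj N _ [cne pu] mc.
  have [[CiC CjC ne] [_ [Nt [mi mj]] _]] := mc.
  split => /= X; rewrite !inE.
    case/orP => [/orP [/andP [_ /cne]//|/andP [_ //]]|/eqP ->].
    have Ci0 := cne Ci CiC.
    have : N :&: Ci != set0.
      apply/negP => /eqP e; move: mi; rewrite e cards0 leNgt => /negP; apply.
      rewrite mulr_gt0 ?ltr0n ?card_gt0 // /eta_of; case: ifP => _ //; exact: eta_pos.
    case/set0Pn => x; rewrite inE => /andP [xN xCi]; apply/set0Pn; exists x.
    by rewrite !inE xN xCi.
  case/orP => [/orP [/andP [_ /pu]//|]|/eqP ->]; last exact: (merge_single (conj cne pu) mc).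
  rewrite mem_cat => /andP [+ _].
  case/orP; case: ifP => p //; rewrite inE => /eqP ->;
    case: (pu _ p) => D DC sD; exists D => //; exact: subset_trans (subsetDl _ _) sD.
Qed.

End Proc.
End Alg.

Theorem lemma13 (R : realFieldType) (T : finType) (S : T -> T -> R)
    (S_sym : forall x y, S x y = S y x)
    (Cstar : {set {set T}}) (hCstar : partition Cstar [set: T])
    (hstab : stable S Cstar)
    (eta : R) (heta : 1 / 2 < eta)
    (steps : seq ({set T} * {set T})) (htree : avg_linkage_tree S steps)
    (st : state T) (hst : reachable steps Cstar eta st) :
  (forall C N N1 N2, split_choice steps Cstar st C N N1 N2 ->
     clean_split Cstar C (C :&: N1) (C :&: N2)) /\
  (forall Ci Cj N, merge_choice steps Cstar eta st Ci Cj N ->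
     exists2 Cl, Cl \in Cstar & N :&: (Ci :|: Cj) \subset Cl).
Proof.
split.
- move=> C N N1 N2 sc; exact: (split_clean S_sym hCstar hstab htree sc).
- move=> Ci Cj N mc.
  exact: (merge_single S_sym hCstar hstab heta htree (reach_inv S_sym hCstar hstab heta htree hst) mc).
Qed.
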